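(* For every $0<\epsilon<1$ and every integer $m\ge2$ there exists a scheduling game on $m$ identical machines of speed $1$ with a global priority list, in which every job has negative deterioration $p_i(t)=\max\{\tau_i,b_i-a_it\}$ with $0\le a_i\le1$, having a pure Nash equilibrium $\sigma$ with $C_{\max}(\sigma)\ge\left(3-\frac2m-\epsilon\right)OPT(G)$. Hence the bound $3-\frac2m$ on the price of anarchy of this class is tight.
   Context: Scheduling game: a finite set $N$ of $n$ jobs (players) and a set $M$ of $m$ machines; machine $j$ has speed $s_j>0$. With a global priority list, all machines share the same bijection $\pi:N\to\{1,\dots,n\}$, and job $u$ has higher priority than $v$ iff $\pi(u)<\pi(v)$. Negative deterioration: $p_i(t)=\max\{\tau_i,b_i-a_it\}$ with $b_i,a_i\ge0$, $\tau_i>0$ ($a_i=0$ gives a fixed-length job). A profile $\sigma\in M^N$ assigns each job to a machine. On machine $j$, the jobs assigned to it, listed in increasing $\pi$-order as $i_1,i_2,\dots$, are processed without idle time: $S_{i_1}(\sigma)=0$, $C_{i_k}(\sigma)=S_{i_k}(\sigma)+p_{i_k}(S_{i_k}(\sigma))/s_j$, $S_{i_{k+1}}(\sigma)=C_{i_k}(\sigma)$. The cost of job $i$ is $C_i(\sigma)$. A pure Nash equilibrium (NE) is a profile in which no job can strictly decrease its completion time by unilaterally changing its machine. Makespan $C_{\max}(\sigma)=\max_iC_i(\sigma)$; $OPT(G)=\min_\sigma C_{\max}(\sigma)$ over all profiles. *)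

(* Defs.v *)
From HB Require Import structures.
From mathcomp Require Import all_boot all_order all_algebra all_fingroup.
From mathcomp Require Import reals.
Set Implicit Arguments. Unset Strict Implicit. Unset Printing Implicit Defensive.
Import Order.TTheory GRing.Theory Num.Theory.
Local Open Scope ring_scope.

(* A scheduling game with n jobs ('I_n) and m machines ('I_m), a global
   priority list pi (job u before v iff pi u < pi v), and negatively
   deteriorating jobs p_i(t) = max(tau_i, b_i - a_i t). *)
Record game (R : realType) (n m : nat) := Game {
  tau : 'I_n -> R;
  bb : 'I_n -> R;
  aa : 'I_n -> R;
  prio : {perm 'I_n};
  speed : 'I_m -> R
}.

Section Sched.
Variables (R : realType) (n m : nat) (G : game R n m).

Definition proc (i : 'I_n) (t : R) : R := Num.max (tau G i) (bb G i - aa G i * t).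

Definition job_order : seq 'I_n := [seq (prio G)^-1%g k | k <- enum 'I_n].

Definition machine_jobs (sigma : {ffun 'I_n -> 'I_m}) (j : 'I_m) : seq 'I_n :=
  [seq i <- job_order | sigma i == j].

Fixpoint run (s t : R) (l : seq 'I_n) : R :=
  match l with
  | [::] => t
  | i :: l' => run s (t + proc i t / s) l'
  end.

Definition completion (sigma : {ffun 'I_n -> 'I_m}) (i : 'I_n) : R :=
  let L := machine_jobs sigma (sigma i) in
  run (speed G (sigma i)) 0 (take (index i L).+1 L).

Definition makespan (sigma : {ffun 'I_n -> 'I_m}) : R :=
  \big[Num.max/0]_(i < n) completion sigma i.

Definition deviate (sigma : {ffun 'I_n -> 'I_m}) (i : 'I_n) (j : 'I_m)
  : {ffun 'I_n -> 'I_m} := [ffun k => if k == i then j else sigma k].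

Definition is_NE (sigma : {ffun 'I_n -> 'I_m}) : Prop :=
  forall (i : 'I_n) (j : 'I_m), completion sigma i <= completion (deviate sigma i j) i.

Definition is_OPT (v : R) : Prop :=
  (exists sigma, makespan sigma = v) /\ (forall sigma, v <= makespan sigma).

End Sched.

(* Main.v *)
Require Import Defs.
From HB Require Import structures.
From mathcomp Require Import all_boot all_order all_algebra all_fingroup.
From mathcomp Require Import reals.
From mathcomp Require Import ring lra zify.
Import Order.TTheory GRing.Theory Num.Theory.
Local Open Scope ring_scope.
Section Generic.
Variables (R : realType) (n m : nat) (G : game R n m).

Definition ltv (a b : 'I_n) := (val a < val b)%N.

Lemma sorted_enum_ord : sorted ltv (enum 'I_n).
Proof. by have := iota_ltn_sorted 0 n; rewrite -val_enum_ord sorted_map. Qed.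

Lemma ltv_trans : transitive ltv.
Proof. move=> a b c; rewrite /ltv; exact: ltn_trans. Qed.

Lemma take_index_filter (P : pred 'I_n) (s : seq 'I_n) i :
  sorted ltv s -> i \in s -> P i ->
  take (index i (filter P s)) (filter P s) = filter (fun k => P k && (k < i)%N) s.
Proof.
elim: s => [//|x s IH] /= Hs; rewrite inE => /orP [/eqP ->|Hi] Pi.
  rewrite Pi /= eqxx /= ltnn /=.
  have := order_path_min ltv_trans Hs; move=> /allP Hall.
  rewrite (@eq_in_filter _ _ pred0) ?filter_pred0 // => k Hk /=.
  by have := Hall k Hk; rewrite /ltv; case: (P k) => /=; lia.
have Hs' := path_sorted Hs.
have Hxi : (x < i)%N by have := order_path_min ltv_trans Hs => /allP /(_ i Hi).
case Px: (P x) => /=.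
  have -> : (x == i) = false by apply/negbTE; rewrite neq_ltn Hxi.
  by rewrite /= Hxi (IH Hs' Hi Pi).
exact: IH.
Qed.

Lemma run_rcons s t l x : run G s t (rcons l x) = run G s t l + proc G x (run G s t l) / s.
Proof. by elim: l t => [|y l IH] t //=. Qed.

Lemma filter_head (P : pred 'I_n) (s : seq 'I_n) j :
  sorted ltv s -> j \in s -> P j -> (forall k, k \in s -> P k -> (j <= k)%N) ->
  filter P s = j :: filter (fun k => P k && (k != j)) s.
Proof.
elim: s => [//|x s IH] /= Hs; rewrite inE => /orP [/eqP Ejx|Hj] Pj Hmin.
  subst j; rewrite Pj eqxx /=; congr (_ :: _); apply: eq_in_filter => k Hk.
  have := order_path_min ltv_trans Hs => /allP /(_ k Hk); rewrite /ltv => Hxk.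
  have -> : (k != x) by rewrite neq_ltn Hxk orbT.
  by rewrite andbT.
have Hs' := path_sorted Hs.
have Hxj : (x < j)%N by have := order_path_min ltv_trans Hs => /allP /(_ j Hj).
have Px : P x = false.
  apply/negbTE/negP => Px; have := Hmin x; rewrite inE eqxx => /(_ isT Px); lia.
rewrite Px /=; apply: IH => // k Hk; apply: Hmin; by rewrite inE Hk orbT.
Qed.

Hypothesis hprio : prio G = 1%g.
Hypothesis hspeed : forall j, speed G j = 1.

Lemma job_orderE : job_order G = enum 'I_n.
Proof.
rewrite /job_order hprio -[RHS]map_id; apply: eq_map => k.
by rewrite invg1 perm1.
Qed.

Lemma completionE (sigma : {ffun 'I_n -> 'I_m}) i :
  completion G sigma i =
  run G 1 0 [seq k <- enum 'I_n | (sigma k == sigma i) && (k < i)%N] +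
  proc G i (run G 1 0 [seq k <- enum 'I_n | (sigma k == sigma i) && (k < i)%N]).
Proof.
rewrite /completion /machine_jobs job_orderE hspeed.
set L := filter _ _.
have HiL : i \in L by rewrite mem_filter eqxx mem_enum.
rewrite (take_nth i); last by rewrite index_mem.
rewrite nth_index // run_rcons divr1 take_index_filter //.
- exact: sorted_enum_ord.
- by rewrite mem_enum.
Qed.

Lemma run_const l c t : (forall x, x \in l -> forall u, proc G x u = c) ->
  run G 1 t l = t + (size l)%:R * c.
Proof.
elim: l t => [|x l IH] t H /=; first by rewrite mul0r addr0.
rewrite IH; last by move=> y Hy; apply: H; rewrite inE Hy orbT.
rewrite H ?inE ?eqxx // divr1 -add1n natrD; ring.
Qed.

Lemma run_Dbound l d t : 0 <= d ->
  (forall x, x \in l -> forall u, proc G x u <= Num.max d (1 - u)) ->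
  run G 1 t l <= Num.max t 1 + (size l)%:R * d.
Proof.
move=> d0; elim: l t => [|x l IH] t H /=; first by rewrite mul0r addr0 le_max lexx.
apply: le_trans (IH _ _) _; first by move=> y Hy; apply: H; rewrite inE Hy orbT.
have Hx := H x (mem_head _ _) t.
rewrite divr1 -add1n natrD mulrDl mul1r addrA lerD2r.
have Hx' : proc G x t <= d \/ proc G x t <= 1 - t by move: Hx; rewrite le_max => /orP.
rewrite !maxEle; case: (lerP t 1) => Ht1; case: ifP => /= Hc; case: Hx' => ?; lra.
Qed.

Lemma run_ge l t : (forall x, 0 < tau G x) -> t <= run G 1 t l.
Proof.
move=> Ht; elim: l t => [|x l IH] t /=; first by [].
apply: le_trans (IH _); rewrite divr1 lerDl /proc le_max; apply/orP; left.
exact: ltW.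
Qed.
End Generic.


Section Constr.
Variables (R : realType) (m : nat) (eps : R).
Hypotheses (hm : (2 <= m)%N) (he0 : 0 < eps) (he1 : eps < 1).
Local Notation N := (m * (m - 1)).+1.

Lemma mpos : (0 < m)%N. Proof. lia. Qed.

Definition dl : R := eps / (3 * (N.+1)%:R).
Definition isD (k : 'I_N) := (k < m)%N.
Definition isL (k : 'I_N) := ((k : nat) == m * (m - 1))%N.
Definition gtau (k : 'I_N) : R := if isD k then dl else if isL k then 1 else (m%:R)^-1.
Definition gbb (k : 'I_N) : R := if isD k then 1 else if isL k then 1 else (m%:R)^-1.
Definition gaa (k : 'I_N) : R := if isD k then 1 else 0.
Definition Gm : game R N m := Game gtau gbb gaa 1%g (fun _ => 1).

Lemma ltdiv (k : 'I_N) : (k %/ m < m)%N.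
Proof. rewrite ltn_divLR ?mpos //; have := ltn_ord k; nia. Qed.

Definition sne : {ffun 'I_N -> 'I_m} := [ffun k : 'I_N => Ordinal (ltn_pmod k mpos)].
Definition sopt : {ffun 'I_N -> 'I_m} := [ffun k : 'I_N => Ordinal (ltdiv k)].

Lemma dl_pos : 0 < dl.
Proof. by rewrite /dl divr_gt0 // mulr_gt0 // ltr0n. Qed.

Lemma dl_le1 : dl <= 1.
Proof.
rewrite /dl ler_pdivrMr ?mulr_gt0 ?ltr0n // mul1r.
have : 1 <= (N.+1)%:R :> R by rewrite ler1n.
move: ((N.+1)%:R : R) (he1) => X hX h1; lra.
Qed.

Lemma dlN : (N.+1)%:R * dl = eps / 3.
Proof. by rewrite /dl; field; rewrite -natrM -natrD pnatr_eq0. Qed.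

Lemma minv_pos : 0 < (m%:R : R)^-1.
Proof. by rewrite invr_gt0 ltr0n mpos. Qed.

Lemma tau_pos k : 0 < tau Gm k.
Proof.
rewrite /= /gtau; case: ifP => _; first exact: dl_pos.
by case: ifP => _; [exact: ltr01 | exact: minv_pos].
Qed.

Lemma procD k u : isD k -> proc Gm k u = Num.max dl (1 - u).
Proof. by rewrite /proc /= /gtau /gbb /gaa => ->; rewrite mul1r. Qed.

Lemma procF k u : ~~ isD k -> proc Gm k u = gbb k.
Proof.
move=> /negbTE Hk; rewrite /proc /= /gtau /gbb /gaa Hk mul0r subr0 maxxx.
by case: ifP.
Qed.

Lemma Gprio : prio Gm = 1%g. Proof. by []. Qed.
Lemma Gspeed j : speed Gm j = 1. Proof. by []. Qed.


Lemma N_ge_m : (m <= N)%N. Proof. have := mpos; nia. Qed.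

Lemma sneE k : (sne k : nat) = (k %% m)%N. Proof. by rewrite ffunE. Qed.

Lemma compl_ge1D (sigma : {ffun 'I_N -> 'I_m}) i : isD i -> 1 <= completion Gm sigma i.
Proof.
move=> Hi; rewrite completionE // procD //.
set u := run _ _ _ _.
have h : 1 - u <= Num.max dl (1 - u) by rewrite le_max lexx orbT.
lra.
Qed.

Lemma max_dl1 : Num.max dl (1 - 0) = 1.
Proof. by rewrite subr0 maxEle dl_le1. Qed.

Lemma compl_neD i : isD i -> completion Gm sne i = 1.
Proof.
move=> Hi; rewrite completionE // (@eq_in_filter _ _ pred0) ?filter_pred0 /=.
  by rewrite add0r procD // max_dl1.
move=> k _ /=; apply/negbTE/negP => /andP [/eqP H1 H2].
move: H1 => /(congr1 (@nat_of_ord m)); rewrite !sneE.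
move: Hi; rewrite /isD => Hi.
rewrite (modn_small Hi) modn_small; first lia.
lia.
Qed.

Definition j0 (c : 'I_m) : 'I_N := inord c.

Lemma j0E c : (j0 c : nat) = c.
Proof. rewrite /j0 inordK //; have := ltn_ord c; have := N_ge_m; lia. Qed.

Definition pre' (sigma : {ffun 'I_N -> 'I_m}) i :=
  [seq k <- enum 'I_N | ((sigma k == sigma i) && (k < i)%N) && (k != j0 (sigma i))].

Lemma compl_struct (sigma : {ffun 'I_N -> 'I_m}) i :
  (forall k, k != i -> sigma k = sne k) -> ~~ isD i ->
  completion Gm sigma i = 1 + (size (pre' sigma i))%:R * (m%:R)^-1 + gbb i.
Proof.
move=> Hs Hi; have Hi' : (m <= i)%N by move: Hi; rewrite /isD; lia.
have Hc := ltn_ord (sigma i).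
have Hj0i : (j0 (sigma i) < i)%N by rewrite j0E; lia.
have Hsj0 : sigma (j0 (sigma i)) = sigma i.
  rewrite Hs; last by apply/negP => /eqP E; move: Hj0i; rewrite E ltnn.
  by apply/ord_inj; rewrite sneE j0E modn_small.
rewrite completionE // (@filter_head _ _ _ (j0 (sigma i))).
- rewrite /= procD; last by rewrite /isD j0E.
  rewrite divr1 add0r max_dl1 (@run_const _ _ _ _ _ (m%:R)^-1).
    by rewrite procF.
  move=> x; rewrite mem_filter => /andP [/andP [/andP [/eqP Hx1 Hx2] Hx3] _] u.
  have Hxi : x != i by apply/negP => /eqP E; move: Hx2; rewrite E ltnn.
  have Hxm : (x %% m)%N = sigma i by rewrite -sneE -Hs // Hx1.
  have Hx3' : (x : nat) != sigma i.
    by apply: contra Hx3 => /eqP E; apply/eqP/ord_inj; rewrite j0E.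
  have HnD : ~~ isD x.
    rewrite /isD; apply/negP => Hlt; move: Hx3'; rewrite -Hxm modn_small //.
    by rewrite eqxx.
  rewrite procF // /gbb (negbTE HnD).
  have -> : isL x = false.
    rewrite /isL; apply/negbTE; have := ltn_ord i; lia.
  by [].
- exact: sorted_enum_ord.
- by rewrite mem_enum.
- by rewrite Hsj0 eqxx Hj0i.
- move=> k _ /andP [/eqP Hk1 Hk2].
  have Hki : k != i by apply/negP => /eqP E; move: Hk2; rewrite E ltnn.
  rewrite j0E -Hk1 Hs // sneE; exact: leq_mod.
Qed.


Lemma S_bound (i : 'I_N) t c : (c < m)%N -> (t < i %/ m - 1)%N -> (t.+1 * m + c < i)%N.
Proof.
move=> hc ht; have := leq_trunc_div i m; move: ht; move: (i %/ m)%N => q ht hq.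
nia.
Qed.

Definition Sl (c q : nat) : seq 'I_N := [seq inord (t.+1 * m + c) | t <- iota 0 (q - 1)].

Lemma size_Sl c q : size (Sl c q) = (q - 1)%N.
Proof. by rewrite size_map size_iota. Qed.

Lemma pre'_lb (sigma : {ffun 'I_N -> 'I_m}) i :
  (forall k, k != i -> sigma k = sne k) -> ~~ isD i ->
  (i %/ m - 1 <= size (pre' sigma i))%N.
Proof.
move=> Hs Hi; rewrite -(size_Sl (sigma i) (i %/ m)); apply: uniq_leq_size.
  rewrite map_inj_in_uniq ?iota_uniq // => t1 t2; rewrite !mem_iota !add0n.
  move=> /andP[_ h1] /andP[_ h2] /(congr1 (@nat_of_ord N)).
  have hc := ltn_ord (sigma i); have hi := ltn_ord i.
  have v1 := @S_bound i _ _ hc h1; have v2 := @S_bound i _ _ hc h2.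
  rewrite !inordK; try lia.
  move=> /addIn /eqP; rewrite eqn_pmul2r ?mpos // => /eqP [] //.
move=> x /mapP [t]; rewrite mem_iota add0n => /andP [_ ht] ->.
have hc := ltn_ord (sigma i); have hi := ltn_ord i.
have hv := @S_bound i _ _ hc ht.
have Hx : (inord (t.+1 * m + sigma i) : 'I_N) = (t.+1 * m + sigma i)%N :> nat.
  by rewrite inordK //; lia.
have Hxi : (inord (t.+1 * m + sigma i) : 'I_N) != i.
  by apply/negP => /eqP /(congr1 (@nat_of_ord N)); rewrite Hx; lia.
rewrite mem_filter mem_enum andbT; apply/andP; split; first (apply/andP; split).
- apply/eqP/ord_inj; rewrite Hs // sneE Hx modnMDl modn_small //.
- by rewrite Hx.
- apply/negP => /eqP /(congr1 (@nat_of_ord N)); rewrite Hx j0E.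
  have : (m <= t.+1 * m)%N by rewrite leq_pmull.
  lia.
Qed.

Lemma pre'_ub i : ~~ isD i -> (size (pre' sne i) <= i %/ m - 1)%N.
Proof.
move=> Hi; rewrite -(size_Sl (sne i) (i %/ m)); apply: uniq_leq_size.
  by rewrite filter_uniq ?enum_uniq.
move=> x; rewrite mem_filter => /andP [/andP [/andP [/eqP Hx1 Hx2] Hx3] _].
have Hx1' : (x %% m)%N = (i %% m)%N by rewrite -!sneE Hx1.
have Hx3' : (x : nat) != (i %% m)%N.
  by apply: contra Hx3 => /eqP E; apply/eqP/ord_inj; rewrite j0E sneE.
have Hxd := divn_eq x m; have Hid := divn_eq i m.
have Ha1 : (0 < x %/ m)%N.
  rewrite lt0n; apply/negP => /eqP E; move: Hxd; rewrite E mul0n add0n Hx1' => E'.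
  by move: Hx3'; rewrite -E' eqxx.
have Haq : (x %/ m < i %/ m)%N.
  rewrite -(ltn_pmul2r mpos); move: Hx2; rewrite {1}Hxd {1}Hid Hx1'; lia.
apply/mapP; exists (x %/ m - 1)%N; first by rewrite mem_iota; lia.
have -> : (x %/ m - 1).+1 = (x %/ m)%N by lia.
apply/ord_inj; rewrite sneE -Hx1' -divn_eq inordK //.
Qed.


Lemma sne_NE : is_NE Gm sne.
Proof.
move=> i j; case HD: (isD i).
  by rewrite compl_neD //; exact: compl_ge1D.
have HnD : ~~ isD i by rewrite HD.
have Hdev : forall k, k != i -> deviate sne i j k = sne k.
  by move=> k /negbTE Hk; rewrite ffunE Hk.
rewrite !compl_struct //.
rewrite lerD2r lerD2l ler_wpM2r ?invr_ge0 ?ler0n // ler_nat.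
exact: leq_trans (pre'_ub i HnD) (pre'_lb _ i Hdev HnD).
Qed.

Definition Lidx : 'I_N := ord_max.

Lemma Lidx_nD : ~~ isD Lidx.
Proof. rewrite /isD /Lidx /=; have := hm; nia. Qed.

Lemma makespan_ge (sigma : {ffun 'I_N -> 'I_m}) i : completion Gm sigma i <= makespan Gm sigma.
Proof. exact: (le_bigmax _ (fun i => completion Gm sigma i) i). Qed.

Lemma makespan_ge1 (sigma : {ffun 'I_N -> 'I_m}) : 1 <= makespan Gm sigma.
Proof.
apply: le_trans (makespan_ge sigma Lidx).
rewrite completionE // procF ?Lidx_nD //.
have Hg : gbb Lidx = 1 by rewrite /gbb (negbTE Lidx_nD) /isL /= eqxx.
rewrite Hg; have := @run_ge _ _ _ Gm [seq k <- enum 'I_N | (sigma k == sigma Lidx) && (k < Lidx)%N] 0 tau_pos.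
move: (run _ _ _ _) => u hu; lra.
Qed.

Lemma makespan_sne : 3 - 2 / m%:R <= makespan Gm sne.
Proof.
apply: le_trans (makespan_ge sne Lidx).
rewrite compl_struct //; last exact: Lidx_nD.
have Hg : gbb Lidx = 1 by rewrite /gbb (negbTE Lidx_nD) /isL /= eqxx.
have := pre'_lb sne Lidx (fun _ _ => erefl) Lidx_nD.
rewrite /Lidx /= mulKn ?mpos // Hg => hs.
have : ((m - 1 - 1)%:R : R) <= (size (pre' sne ord_max))%:R by rewrite ler_nat.
rewrite -!subnDA natrB; last by have := hm; lia.
have hm0 : (m%:R : R) != 0 by rewrite pnatr_eq0; have := hm; lia.
have hm2 : (2 : R) <= m%:R by rewrite (ler_nat R 2 m).
move: (size _)%:R => s hs'.
have hmi : 0 < (m%:R : R)^-1 by rewrite invr_gt0; lra.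
have E : 3 - 2 / m%:R = 1 + (m%:R - (1 + 1)%:R) * (m%:R)^-1 + 1 :> R by field.
rewrite E lerD2r lerD2l ler_wpM2r //; lra.
Qed.


Lemma soptE k : (sopt k : nat) = (k %/ m)%N. Proof. by rewrite ffunE. Qed.

Lemma compl_opt i : completion Gm sopt i <= 1 + eps / 3.
Proof.
have he := he0; have dl0 := dl_pos.
rewrite completionE //.
set pre := [seq k <- enum 'I_N | _].
have Hpre : forall k, k \in pre -> (k %/ m = i %/ m)%N /\ (k < i)%N.
  move=> k; rewrite mem_filter => /andP [/andP [/eqP E H] _]; split => //.
  by rewrite -!soptE E.
case HD: (isD i).
  have Hu : run Gm 1 0 pre <= Num.max 0 1 + (size pre)%:R * dl.
    apply: run_Dbound; first exact: ltW.
    move=> x Hx u; rewrite procD //.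
    have [E _] := Hpre x Hx; move: HD; rewrite /isD => HD.
    by rewrite /isD ltnNge -(@divn_gt0 m x mpos) E (divn_small HD).
  have Hs : ((size pre)%:R : R) <= N%:R.
    by rewrite ler_nat size_filter (leq_trans (count_size _ _)) // size_enum_ord.
  have Hs' : (size pre)%:R * dl + dl <= eps / 3.
    have E : (N.+1)%:R * dl = N%:R * dl + dl :> R by rewrite -addn1 natrD mulrDl mul1r.
    rewrite -dlN E lerD2r ler_wpM2r //; exact: ltW.
  rewrite procD //; move: Hu Hs'; rewrite maxEle ler01.
  move: (run _ _ _ _) ((size pre)%:R * dl) => u sd Hu Hs'.
  rewrite maxEle; case: ifP => _; lra.
have HnD : ~~ isD i by rewrite HD.
rewrite procF //; case HL: (isL i).
  have -> : pre = [::].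
    apply/nilP; rewrite /nilp size_eq0; apply/eqP/nilP; rewrite /nilp.
    case: pre Hpre => [//|k l] /(_ k (mem_head _ _)) [E Hk].
    move: HL; rewrite /isL => /eqP HL; move: E; rewrite HL mulKn ?mpos // => E.
    have := leq_trunc_div k m; rewrite E; move: Hk; rewrite HL; nia.
  rewrite /= /gbb HD HL; lra.
have HF : forall x, x \in pre -> forall u, proc Gm x u = (m%:R)^-1.
  move=> x Hx u; have [E Hxi] := Hpre x Hx.
  have HxD : ~~ isD x.
    by rewrite /isD -leqNgt -(@divn_gt0 m x mpos) E (@divn_gt0 m i mpos) leqNgt.
  rewrite procF // /gbb (negbTE HxD).
  have -> : isL x = false by rewrite /isL; apply/negbTE; have := ltn_ord i; lia.
  by [].
rewrite (@run_const _ _ _ Gm pre _ 0 HF) /gbb HD HL add0r.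
have Hsz : ((size pre).+1 <= m)%N.
  set S := [seq (inord ((i %/ m) * m + t) : 'I_N) | t <- iota 0 m].
  have HS : size S = m by rewrite size_map size_iota.
  suff : (size (rcons pre i) <= size S)%N by rewrite size_rcons HS.
  apply: uniq_leq_size.
    rewrite rcons_uniq filter_uniq ?enum_uniq // andbT.
    by apply/negP => /Hpre [_]; rewrite ltnn.
  move=> x; rewrite mem_rcons inE => /orP [/eqP ->|Hx].
    apply/mapP; exists (i %% m)%N; first by rewrite mem_iota ltn_mod mpos.
    by apply/ord_inj; rewrite -divn_eq inordK.
  have [E _] := Hpre x Hx.
  apply/mapP; exists (x %% m)%N; first by rewrite mem_iota ltn_mod mpos.
  by apply/ord_inj; rewrite -E -divn_eq inordK.
have Hm : ((size pre)%:R + 1 : R) <= m%:R.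
  by rewrite -[1]/(1%:R) -natrD addn1 ler_nat.
have hm0 : (0 : R) < m%:R by rewrite ltr0n mpos.
have : ((size pre)%:R + 1) * (m%:R)^-1 <= m%:R * (m%:R)^-1 :> R.
  by rewrite ler_wpM2r // invr_ge0 ltW.
rewrite mulfV ?gt_eqF // mulrDl mul1r.
move: ((size pre)%:R * _) => a; move: (he0) => ?; lra.
Qed.


Lemma main_constr :
  exists (n : nat) (G : game R n m) (sigma : {ffun 'I_n -> 'I_m}),
    [/\ (0 < n)%N,
        (forall j : 'I_m, speed G j = 1),
        (forall i : 'I_n, [/\ 0 < tau G i, 0 <= bb G i & 0 <= aa G i <= 1]),
        is_NE G sigma &
        exists opt : R, is_OPT G opt /\
          (3 - 2 / m%:R - eps) * opt <= makespan G sigma].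
Proof.
exists N, Gm, sne; split => //.
- move=> i; split; first exact: tau_pos.
    rewrite /= /gbb; case: ifP => _; first exact: ler01.
    by case: ifP => _; [exact: ler01 | exact: ltW minv_pos].
  by rewrite /= /gaa; case: ifP => _; rewrite ?lexx ?ler01.
- exact: sne_NE.
case: (@arg_minP _ _ _ sopt xpredT (makespan Gm) isT) => s _ Hmin.
exists (makespan Gm s); split; first by split; [exists s | move=> sg; exact: Hmin].
have h1 := makespan_ge1 s.
have h2 : makespan Gm s <= 1 + eps / 3.
  apply: le_trans (Hmin sopt isT) _; rewrite /makespan.
  apply: bigmax_le => [|i _]; last exact: compl_opt.
  by move: (he0) => ?; lra.
have h3 := makespan_sne.
have hm0 : (0 : R) < m%:R by rewrite ltr0n mpos.
have hc1 : 2 / m%:R <= 1 :> R by rewrite ler_pdivrMr // mul1r (ler_nat R 2 m).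
have hc0 : 0 < 2 / m%:R :> R by rewrite divr_gt0.
move: h3 hc1 hc0 (he0) (he1) h1 h2; move: (2 / m%:R) (makespan Gm s) (makespan Gm sne).
move=> c o M h3 hc1 hc0 e0 e1 h1 h2.
apply: le_trans h3.
have := @mulr_ge0 _ (3 - c - eps) (1 + eps / 3 - o); rewrite !subr_ge0.
move=> H; have H' := H ltac:(lra) ltac:(lra).
nra.
Qed.

End Constr.

Theorem theorem15 (R : realType) (eps : R) (m : nat) :
  0 < eps -> eps < 1 -> (2 <= m)%N ->
  exists (n : nat) (G : game R n m) (sigma : {ffun 'I_n -> 'I_m}),
    [/\ (0 < n)%N,
        (forall j : 'I_m, speed G j = 1),
        (forall i : 'I_n, [/\ 0 < tau G i, 0 <= bb G i & 0 <= aa G i <= 1]),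
        is_NE G sigma &
        exists opt : R, is_OPT G opt /\
          (3 - 2 / m%:R - eps) * opt <= makespan G sigma].
Proof. move=> he0 he1 hm; exact: main_constr. Qed.
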